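(* There is an absolute constant $K$ such that for every integer $n \ge 1$ and every integer $c$ with $0 \le c < n$, there is a deterministic finite automaton with at most $K n^2$ states (not counting a dead state) accepting the language $$L_{n,c} = \{ x \times y \in (\{0,1\}\times\{0,1\})^* : x, y \text{ valid Fibonacci representations of equal length},\ [y] = n[x] + c \},$$ read most significant digit first.
   Context: Fibonacci numbers: $F_0=0$, $F_1=1$, $F_k=F_{k-1}+F_{k-2}$. For a binary word $x = x_1\cdots x_\ell$, $[x] = \sum_{j=1}^{\ell} x_j F_{\ell-j+2}$. A valid Fibonacci representation is a binary word with no factor $11$; leading zeros allowed. For words $x,y$ of equal length, $x\times y$ is the word over $\{0,1\}^2$ with first component $x$ and second component $y$. *)

(* Defs.v *)
From mathcomp Require Import all_boot.
Set Implicit Arguments. Unset Strict Implicit. Unset Printing Implicit Defensive.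

Fixpoint fib (n : nat) : nat :=
  match n with
  | 0 => 0
  | m.+1 => match m with 0 => 1 | k.+1 => fib m + fib k end
  end.

(* [x] = sum_{j=1}^{l} x_j F_{l-j+2}; here j is 0-indexed, so F_{l-j+1} *)
Definition fibval (x : seq bool) : nat :=
  \sum_(j < size x) nth false x j * fib (size x - j + 1).

(* valid Fibonacci representation: no factor 11 (leading zeros allowed) *)
Definition fib_valid (x : seq bool) : bool :=
  all (fun p : bool * bool => ~~ (p.1 && p.2)) (zip x (behead x)).

(* the language L_{n,c} over the alphabet {0,1} x {0,1};
   a word w over pairs is x \times y with x = map fst w, y = map snd w
   (automatically of equal length) *)
Definition L_nc (n c : nat) (w : seq (bool * bool)) : bool :=
  let x := map fst w in
  let y := map snd w in
  [&& fib_valid x, fib_valid y & fibval y == n * fibval x + c].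

(* A (partial) deterministic finite automaton on the state set Q: a missing
   transition (None) means going to the (uncounted) dead state. *)
Record dfa (Q : finType) := DFA {
  dfa_start : Q;
  dfa_delta : Q -> bool * bool -> option Q;
  dfa_final : {set Q}
}.

Definition dfa_run (Q : finType) (A : dfa Q) (w : seq (bool * bool)) : option Q :=
  foldl (fun q a => obind (fun s => dfa_delta A s a) q) (Some (dfa_start A)) w.

Definition dfa_accepts (Q : finType) (A : dfa Q) (w : seq (bool * bool)) : bool :=
  if dfa_run A w is Some s then s \in dfa_final A else false.

(* Main.v *)
Require Import Defs.
From mathcomp Require Import all_boot all_order all_algebra.
From mathcomp Require Import zify ring.
Import Order.TTheory GRing.Theory Num.Theory.

Lemma fibSS k : fib k.+2 = (fib k.+1 + fib k)%N.
Proof. by []. Qed.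

Lemma fib_le k : (fib k <= fib k.+1)%N.
Proof. case: k => // k; rewrite fibSS; lia. Qed.

Lemma fib_gt0 k : (0 < fib k.+1)%N.
Proof. elim: k => // k IH; rewrite fibSS; lia. Qed.

Lemma fib_add a b : fib (a + b).+1 = (fib a.+1 * fib b.+1 + fib a * fib b)%N.
Proof.
elim: a b => [|a IH] b; first by rewrite add0n /= mul1n mul0n addn0.
rewrite addSn -addnS IH !fibSS; ring.
Qed.

Lemma fibval_cons b x : fibval (b :: x) = (b * fib (size x).+2 + fibval x)%N.
Proof.
rewrite /fibval [size (b :: x)]/= big_ord_recl; congr (_ + _)%N.
have ->: ((size x).+1 - @ord0 (size x) + 1 = (size x).+2)%N by rewrite /= subn0 addn1.
done.
Qed.

Lemma fibval_le x : (fibval x <= fib (size x).+3)%N.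
Proof.
elim: x => [|b x IH]; first by rewrite /fibval big_ord0.
rewrite fibval_cons [size (b :: x)]/= (fibSS (size x).+2); case: b; rewrite ?mul1n ?mul0n; lia.
Qed.

Lemma fib_valid_cons a s :
  fib_valid (a :: s) = (if s is c :: _ then ~~ (a && c) else true) && fib_valid s.
Proof. by case: s. Qed.

Lemma fib_valid_rcons x b :
  fib_valid (rcons x b) = fib_valid x && ~~ (last false x && b).
Proof.
elim: x => [|a x IH] //=.
rewrite fib_valid_cons IH fib_valid_cons.
case: x IH => [|c x] /= IH; first by rewrite andbT.
by rewrite andbA.
Qed.

Section Int.
Local Open Scope ring_scope.
Variable n : nat.

Definition ee (a : bool * bool) : int := (nat_of_bool a.2)%:Z - n%:Z * (nat_of_bool a.1)%:Z.
Definition dstep (d : int * int) (a : bool * bool) : int * int :=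
  (d.1 + d.2 + ee a, d.1 + ee a).
Definition dd (w : seq (bool * bool)) := foldl dstep (0, 0) w.
Definition F (r : nat) : int := (fib r)%:Z.
Definition G (r : nat) : int := (if r is r'.+1 then fib r' else 1%N)%:Z.

Lemma FSS r : F r.+2 = F r.+1 + F r.
Proof. by rewrite /F fibSS PoszD. Qed.
Lemma FG r : F r.+1 = F r + G r.
Proof. case: r => [|r] //; by rewrite /F /G fibSS PoszD. Qed.

Lemma foldS a b s : foldl dstep (a, b) s =
  (F (size s).+1 * a + F (size s) * b + (dd s).1,
   F (size s) * a + G (size s) * b + (dd s).2).
Proof.
elim: s a b => [|x s IH] a b.
  by rewrite /= /F /G /=; congr (_, _); ring.
rewrite /dd /= !IH /= FSS [G (size s).+1]/G -/(F (size s)) !FG.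
congr (_, _); ring.
Qed.

Lemma dd_cons x s : (dd (x :: s)).1 = F (size s).+2 * ee x + (dd s).1.
Proof. rewrite {1}/dd /= foldS /= FSS; ring. Qed.

Lemma dd1_val w : (dd w).1 = (fibval (map snd w))%:Z - n%:Z * (fibval (map fst w))%:Z.
Proof.
elim: w => [|x w IH]; first by rewrite /dd /fibval /= !big_ord0 /=; ring.
rewrite dd_cons IH /= !fibval_cons !size_map !PoszD !PoszM /ee /F; ring.
Qed.

Lemma ee_bound a : (1 <= n)%N -> - n%:Z <= ee a <= n%:Z.
Proof. case: a => [[] []] /= hn; rewrite /ee /=; lia. Qed.

Lemma prefix_bound p t : (1 <= n)%N -> (size p <= t)%N ->
  - (n%:Z * F t.+1) <= F t * (dd p).1 - F t.+1 * (dd p).2 <= n%:Z * F t.+1.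
Proof.
move=> hn; elim/last_ind: p t => [|p a IH] t.
  move=> _; rewrite /dd /= !mulr0 subr0.
  have : 0 <= n%:Z * F t.+1 by rewrite /F; lia.
  lia.
rewrite size_rcons; case: t => // t ht.
rewrite /dd foldl_rcons -/(dd p).
case: (dd p) (IH t ht) => d1 d2 /= {}IH.
have e1 := ee_bound a hn.
have hf : 0 <= F t by rewrite /F.
have h1 : - (F t * n%:Z) <= F t * ee a <= F t * n%:Z.
  case/andP: e1 => e1 e2; apply/andP; split.
    by rewrite -mulrN ler_wpM2l.
  by rewrite ler_wpM2l.
have -> : F t.+1 * (d1 + d2 + ee a) - F t.+2 * (d1 + ee a) =
  - (F t * d1 - F t.+1 * d2) - F t * ee a by rewrite FSS; ring.
rewrite FSS; lia.
Qed.

End Int.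

Section Key.
Local Open Scope ring_scope.

Lemma key (a b u v d1 d2 X Y c N : int) : 0 <= a -> a <= b -> 1 <= b -> 0 <= u -> u <= v ->
  1 <= v -> 1 <= N -> 0 <= c -> c < N -> 0 <= X -> X <= 2 * v + u -> 0 <= Y -> Y <= 2 * v + u ->
  - (N * b) <= a * d1 - b * d2 <= N * b -> c = v * d1 + u * d2 + (Y - N * X) ->
  (- (5 * N) <= d1 <= 5 * N) && (- (5 * N) <= d2 <= 5 * N).
Proof.
move=> ha hab hb hu huv hv hN hc hcN hX hXw hY hYw /andP[hR1l hR1u] hc2.
set w := 2 * v + u in hXw hYw.
set R1 := a * d1 - b * d2 in hR1l hR1u.
set R2 := v * d1 + u * d2.
have hR2 : R2 = c - Y + N * X by rewrite hc2 /R2; ring.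
have hNX : N * X <= N * w by rewrite ler_wpM2l //; lia.
have hw : w <= N * w by rewrite -[X in X <= _]mul1r ler_wpM2r //; lia.
have hR2l : - (N * (1 + w)) <= R2 by rewrite hR2; lia.
have hR2u : R2 <= N * (1 + w) by rewrite hR2; lia.
set D := b * v + a * u.
have hD : 0 < D.
  have : 0 <= a * u by apply: mulr_ge0.
  have : 1 <= b * v by rewrite -[1]mul1r; apply: ler_pM; lia.
  rewrite /D; lia.
have e1 : D * d1 = b * R2 + u * R1 by rewrite /D /R2 /R1; ring.
have e2 : D * d2 = a * R2 - v * R1 by rewrite /D /R2 /R1; ring.
have hbR2l : b * (- (N * (1 + w))) <= b * R2 by rewrite ler_wpM2l //; lia.
have hbR2u : b * R2 <= b * (N * (1 + w)) by rewrite ler_wpM2l //; lia.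
have haR2l : a * (- (N * (1 + w))) <= a * R2 by rewrite ler_wpM2l //; lia.
have haR2u : a * R2 <= a * (N * (1 + w)) by rewrite ler_wpM2l //; lia.
have huR1l : u * (- (N * b)) <= u * R1 by rewrite ler_wpM2l //; lia.
have huR1u : u * R1 <= u * (N * b) by rewrite ler_wpM2l //; lia.
have hvR1l : v * (- (N * b)) <= v * R1 by rewrite ler_wpM2l //; lia.
have hvR1u : v * R1 <= v * (N * b) by rewrite ler_wpM2l //; lia.
have hbv : b <= b * v by rewrite -[X in X <= _]mulr1 ler_wpM2l //; lia.
have hbu : b * u <= b * v by rewrite ler_wpM2l //; lia.
have hau : a * v <= b * v by rewrite ler_wpM2r //; lia.
have hav : a <= a * v by rewrite -[X in X <= _]mulr1 ler_wpM2l //; lia.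
have K1 : b * (1 + w) + u * b <= 5 * D by rewrite /w /D; lia.
have K2 : a * (1 + w) + v * b <= 5 * D by rewrite /w /D; lia.
have K1' : N * (b * (1 + w) + u * b) <= N * (5 * D) by rewrite ler_wpM2l //; lia.
have K2' : N * (a * (1 + w) + v * b) <= N * (5 * D) by rewrite ler_wpM2l //; lia.
have B1 : D * d1 <= D * (5 * N) by lia.
have B2 : D * (- (5 * N)) <= D * d1 by lia.
have B3 : D * d2 <= D * (5 * N) by lia.
have B4 : D * (- (5 * N)) <= D * d2 by lia.
rewrite !ler_pM2l // in B1 B2 B3 B4.
by rewrite B1 B2 B3 B4.
Qed.
End Key.

Section Bound.
Local Open Scope ring_scope.
Variables n c : nat.
Hypothesis hn : (1 <= n)%N.
Hypothesis hc : (c < n)%N.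

Definition inr (d : int * int) : bool :=
  (- (5 * n%:Z) <= d.1 <= 5 * n%:Z) && (- (5 * n%:Z) <= d.2 <= 5 * n%:Z).

Lemma bound w k : L_nc n c w -> inr (dd n (take k w)).
Proof.
move=> /and3P[_ _ /eqP hv].
have hdw : (dd n w).1 = c%:Z by rewrite dd1_val hv PoszD PoszM; ring.
have hw := cat_take_drop k w.
set p := take k w in hw *; set s := drop k w in hw.
rewrite -hw /dd foldl_cat -/(dd n p) in hdw.
have hP := @prefix_bound n p (size p) hn (leqnn _).
case: (dd n p) hP hdw => d1 d2 /= hP; rewrite foldS /= dd1_val => hdw.
have hX := fibval_le (map fst s); have hY := fibval_le (map snd s).
rewrite !size_map in hX hY.
rewrite /inr /=.
apply: (@key (F (size p)) (F (size p).+1) (F (size s)) (F (size s).+1) d1 d2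
   (fibval (map fst s))%:Z (fibval (map snd s))%:Z c%:Z n%:Z).
all: try done.
- by rewrite /F lez_nat fib_le.
- by rewrite /F lez_nat fib_gt0.
- by rewrite /F lez_nat fib_le.
- by rewrite /F lez_nat fib_gt0.
- have e : F (size s).+3 = 2 * F (size s).+1 + F (size s) by rewrite !FSS; ring.
  by rewrite -e /F lez_nat.
- have e : F (size s).+3 = 2 * F (size s).+1 + F (size s) by rewrite !FSS; ring.
  by rewrite -e /F lez_nat.
Qed.
End Bound.

Section Auto.
Local Open Scope ring_scope.
Variables n c : nat.
Hypothesis hn : (1 <= n)%N.
Hypothesis hc : (c < n)%N.

Definition NN := (10 * n).+1.
Definition MM := (5 * n)%N.
Definition Qt := ('I_NN * 'I_NN * bool * bool)%type.
Definition dec (i : 'I_NN) : int := (i : nat)%:Z - MM%:Z.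
Definition enc (z : int) : option 'I_NN :=
  if (0 <= z + MM%:Z) && (absz (z + MM%:Z)%R < NN)%N then Some (inord (absz (z + MM%:Z)))
  else None.

Lemma enc_dec z i : enc z = Some i -> dec i = z.
Proof.
rewrite /enc; case: ifP => // /andP[h1 h2] [<-]; rewrite /dec inordK //.
lia.
Qed.

Lemma enc_some z : - (5 * n%:Z) <= z <= 5 * n%:Z -> exists i, enc z = Some i.
Proof.
move=> h; rewrite /enc ifT; first by eexists.
rewrite /MM /NN; lia.
Qed.

Definition delta (q : Qt) (a : bool * bool) : option Qt :=
  let: (i1, i2, px, py) := q in
  if (px && a.1) || (py && a.2) then None else
  match enc (dstep n (dec i1, dec i2) a).1, enc (dstep n (dec i1, dec i2) a).2 with
  | Some j1, Some j2 => Some (j1, j2, a.1, a.2)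
  | _, _ => None
  end.

Definition start : Qt := (inord MM, inord MM, false, false).
Definition final : {set Qt} := [set q : Qt | dec q.1.1.1 == c%:Z].
Definition AA : dfa Qt := @DFA Qt start delta final.

Lemma dec_start : dec (inord MM : 'I_NN) = 0.
Proof. rewrite /dec inordK ?subrr // /MM /NN; lia. Qed.

Lemma run_some w q : dfa_run AA w = Some q ->
  [/\ fib_valid (map fst w), fib_valid (map snd w), dd n w = (dec q.1.1.1, dec q.1.1.2),
      q.1.2 = last false (map fst w) & q.2 = last false (map snd w)].
Proof.
elim/last_ind: w q => [|w a IH] q.
  by move=> [<-]; rewrite /= dec_start.
rewrite /dfa_run foldl_rcons -/(dfa_run AA w).
case E: (dfa_run AA w) => [q0|] //=.
case: (IH q0 E); case: q0 {E} => [[[i1 i2] px] py] /= v1 v2 hd -> ->.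
case: ifP => // hb.
case E1: enc => [j1|] //; case E2: enc => [j2|] // [<-] /=.
have d1 := @enc_dec _ _ E1; have d2 := @enc_dec _ _ E2.
rewrite !map_rcons !fib_valid_rcons !last_rcons v1 v2 /=.
case/norP: hb => /negbTE -> /negbTE ->.
split => //.
by rewrite /dd foldl_rcons -/(dd n w) hd d1 d2.
Qed.

Lemma take_rcons_le (w : seq (bool * bool)) a k : (k <= size w)%N -> take k (rcons w a) = take k w.
Proof. by move=> h; rewrite -cats1 takel_cat. Qed.

Lemma run_good w : fib_valid (map fst w) -> fib_valid (map snd w) ->
  (forall k, inr n (dd n (take k w))) -> exists q, dfa_run AA w = Some q.
Proof.
elim/last_ind: w => [|w a IH]; first by exists start.
rewrite !map_rcons !fib_valid_rcons => /andP[v1 b1] /andP[v2 b2] hk.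
have hw : forall k, inr n (dd n (take k w)).
  move=> k; case: (leqP k (size w)) => hk'.
    by rewrite -(@take_rcons_le w a _ hk').
  rewrite take_oversize ?(ltnW hk') // -(take_size w) -(@take_rcons_le w a _ (leqnn _)).
  exact: hk.
have hl : inr n (dd n (rcons w a)).
  by rewrite -[rcons w a](take_oversize (n := (size w).+1)) ?size_rcons.
case: (IH v1 v2 hw) => q0 E.
case: (@run_some _ _ E); case: q0 E => [[[i1 i2] px] py] E /= _ _ hd hx hy.
rewrite /dfa_run foldl_rcons -/(dfa_run AA w) E /= hx hy.
rewrite (negbTE b1) (negbTE b2) /=.
move: hl; rewrite /dd foldl_rcons -/(dd n w) hd /inr => /andP[h1 h2].
case: (@enc_some _ h1) => j1 ->; case: (@enc_some _ h2) => j2 ->.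
by eexists.
Qed.

Lemma accepts_iff w : dfa_accepts AA w = L_nc n c w.
Proof.
apply/idP/idP.
  rewrite /dfa_accepts; case E: (dfa_run AA w) => [q|] // hq.
  case: (@run_some _ _ E) => v1 v2 hd _ _.
  move: hq; rewrite inE => /eqP hq.
  have := dd1_val n w; rewrite hd /= hq => h.
  rewrite /L_nc v1 v2 /=; apply/eqP; lia.
move=> hL.
have hL' := hL; move/and3P: hL' => [v1 v2 _].
case: (@run_good w v1 v2 (fun k => @bound n c hn hc w k hL)) => q E.
case: (@run_some _ _ E) => _ _ hd _ _.
rewrite /dfa_accepts E inE; apply/eqP.
have := dd1_val n w; rewrite hd /= => ->.
move: hL => /and3P[_ _ /eqP ->]; lia.
Qed.

End Auto.

Theorem theorem7 :
  exists K : nat, forall n c : nat, 1 <= n -> c < n ->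
    exists (Q : finType) (A : dfa Q),
      #|Q| <= K * n ^ 2 /\ forall w : seq (bool * bool), dfa_accepts A w = L_nc n c w.
Proof.
exists 484 => n c hn hc.
exists (Qt n), (AA n c); split; last exact: accepts_iff.
rewrite /Qt !card_prod !card_ord card_bool /NN; nia.
Qed.
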